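(* Let $a,b\in\mathbb{R}^n$. (a) Let $r>0$ and $p\in(1,2]$. Then for all $a,b\in\mathbb{B}(0;r)$, $$\langle \|a\|^{p-2}a-\|b\|^{p-2}b,\ a-b\rangle\ \ge\ \kappa_p\, r^{p-2}\,\|a-b\|^2 .$$ (b) Let $r>0$, $p\ge 2$ and $s=\frac{p}{p-1}$. Then for all $a,b\in\mathbb{B}(0;r)$, $$\big\|\,\|a\|^{p-2}a-\|b\|^{p-2}b\,\big\|\ \le\ \frac{2r^{p-2}}{\kappa_s}\,\|a-b\| .$$
   Context: $\|\cdot\|$ is the Euclidean norm on $\mathbb{R}^n$ and $\mathbb{B}(0;r)$ the open ball of radius $r$ about the origin. The convention $\|0\|^{p-2}\,0=0$ is used (also for $p<2$). The function $\kappa:(1,2]\to(0,\infty)$, $t\mapsto\kappa_t$, is defined by $\kappa_t=\frac{(2+\sqrt3)(t-1)}{16}$ for $t\in(1,\hat t]$, $\kappa_t=\frac{2+\sqrt3}{16}\big(1-(3-\sqrt3)^{1-t}\big)$ for $t\in[\hat t,2)$, and $\kappa_2=1$, where $\hat t\approx 1.3214$ is the solution in $(1,2]$ of $\frac{t(t-1)}{2}=1-\Big[1+\frac{(2-\sqrt3)t}{t-1}\Big]^{1-t}$. *)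

(* Defs.v *)
From HB Require Import structures.
From mathcomp Require Import all_boot all_order all_algebra.
From mathcomp Require Import all_classical all_reals all_analysis.
Set Implicit Arguments. Unset Strict Implicit. Unset Printing Implicit Defensive.
Import Order.TTheory GRing.Theory Num.Theory.
Local Open Scope classical_set_scope.
Local Open Scope ring_scope.

Section Defs.
Variable R : realType.

Definition dotv (n : nat) (a b : 'rV[R]_n) : R := \sum_(i < n) a ord0 i * b ord0 i.
Definition normv (n : nat) (a : 'rV[R]_n) : R := Num.sqrt (dotv a a).

(* a |-> ||a||^{p-2} a, with the convention ||0||^{p-2} 0 = 0
   (automatic since the vector factor is 0) *)
Definition plap (p : R) (n : nat) (a : 'rV[R]_n) : 'rV[R]_n :=
  (normv a `^ (p - 2)) *: a.

Definition hat_t_eq (t : R) : Prop :=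
  t * (t - 1) / 2 = 1 - (1 + (2 - Num.sqrt 3) * t / (t - 1)) `^ (1 - t).

Definition hat_t : R := xget 1 [set t : R | 1 < t <= 2 /\ hat_t_eq t].

(* kappa_t for t in (1,2] (values outside (1,2] are irrelevant) *)
Definition kappa (t : R) : R :=
  if t == 2 then 1
  else if t <= hat_t then (2 + Num.sqrt 3) * (t - 1) / 16
  else (2 + Num.sqrt 3) / 16 * (1 - (3 - Num.sqrt 3) `^ (1 - t)).

End Defs.

(* Main.v *)
From HB Require Import structures.
From mathcomp Require Import all_boot all_order all_algebra.
From mathcomp Require Import all_classical all_reals all_analysis.
From mathcomp Require Import ring lra.
Require Import Defs.
Import Order.TTheory GRing.Theory Num.Theory.
Local Open Scope ring_scope.

Section Aux.
Variable R : realType.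
Implicit Types x y e : R.

Lemma powR_pos x e : 0 < x -> x `^ e = expR (e * ln x).
Proof. by move=> x0; rewrite /powR gt_eqF. Qed.

Lemma powR_anti x y e : 0 < x -> x <= y -> e <= 0 -> y `^ e <= x `^ e.
Proof.
move=> x0 xy e0; have y0 : 0 < y by apply: lt_le_trans xy.
rewrite !powR_pos // ler_expR; apply: ler_wnM2l => //.
by rewrite ler_ln ?posrE.
Qed.

Lemma powR_mono x y e : 0 <= x -> x <= y -> 0 <= e -> x `^ e <= y `^ e.
Proof.
move=> x0 xy e0; apply: ge0_ler_powR => //; rewrite nnegrE //.
exact: le_trans xy.
Qed.

Lemma expR_tangent (u v : R) : expR v * (1 + (u - v)) <= expR u.
Proof.
have -> : expR u = expR v * expR (u - v) by rewrite -expRD addrC subrK.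
by apply: ler_wpM2l; [exact: ltW (expR_gt0 _)|exact: expR_ge1Dx].
Qed.

Lemma ln_le_sub1 x : 0 < x -> ln x <= x - 1.
Proof.
move=> x0; have := @le_ln1Dx R (x - 1).
have -> : 1 + (x - 1) = x by ring.
apply; lra.
Qed.

Lemma powR_diff_b x y q : 0 <= y -> y <= x -> 0 <= q ->
  (x `^ q - y `^ q) * y <= q * x `^ q * (x - y).
Proof.
move=> y0 yx q0; have [->|yp] := eqVneq y 0.
  by rewrite mulr0 mulr_ge0 ?mulr_ge0 ?powR_ge0 ?subr0 ?(le_trans y0 yx).
have ypos : 0 < y by rewrite lt_def yp y0.
have xpos : 0 < x by apply: lt_le_trans yx.
rewrite !powR_pos //.
have := expR_tangent (q * ln y) (q * ln x).
have hl : ln x - ln y <= (x - y) / y.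
  rewrite -lnV ?posrE // -lnM ?posrE ?invr_gt0 //.
  have xy0 : 0 < x * y^-1 by rewrite mulr_gt0 ?invr_gt0.
  have := @ln_le_sub1 (x * y^-1) xy0.
  have -> : x * y^-1 - 1 = (x - y) / y by field; rewrite gt_eqF.
  by [].
set A := expR (q * ln x); set B := expR (q * ln y) => hAB.
have A0 : 0 <= A by exact: ltW (expR_gt0 _).
have h1 : (A - B) <= A * q * (ln x - ln y) by nra.
have h2 : A * q * (ln x - ln y) * y <= A * q * (x - y).
  have : A * q * (ln x - ln y) <= A * q * ((x - y) / y).
    by apply: ler_wpM2l => //; apply: mulr_ge0.
  move=> h; have := ler_wpM2r (ltW ypos) h.
  have e : A * q * ((x - y) / y) * y = A * q * (x - y) by field; rewrite gt_eqF.
  by rewrite -e.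
have h3 : (A - B) * y <= A * q * (ln x - ln y) * y by apply: ler_wpM2r => //; exact: ltW.
rewrite [q * A]mulrC; exact: le_trans h3 h2.
Qed.


Lemma bern x y e : 0 < x -> 0 < y -> 0 < e <= 1 ->
  y `^ e <= x `^ e + e * x `^ (e - 1) * (y - x).
Proof.
move=> x0 y0 /andP[e0 e1]; rewrite !powR_pos //.
have [->|e1'] := eqVneq e 1.
  by rewrite subrr mul0r expR0 !mul1r lnK ?posrE // lnK ?posrE //; lra.
have elt1 : e < 1 by rewrite lt_neqAle e1' e1.
set L := ln x; set M := ln y.
have ie0 : 0 < e^-1 by rewrite invr_gt0.
have ie1 : 0 < (1 - e)^-1 by rewrite invr_gt0 subr_gt0.
have hy := conjugate_powR (expR_ge0 (e * M)) (expR_ge0 ((1 - e) * L)) ie0 ie1.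
have := hy ltac:(rewrite !invrK; ring).
rewrite -!expRM !invrK.
have -> : e * M * e^-1 = M by field; rewrite gt_eqF.
have -> : (1 - e) * L * (1 - e)^-1 = L by field; rewrite subr_eq0 eq_sym.
rewrite /M /L !lnK ?posrE // => h.
set u := expR ((e - 1) * L).
have u0 : 0 < u by exact: expR_gt0.
have hu : expR ((1 - e) * L) = u^-1 by rewrite -expRN; congr expR; ring.
have hx : expR (e * L) = u * x.
  by rewrite /u -[in RHS](@lnK _ x) ?posrE // -expRD /L; congr expR; ring.
rewrite hu in h; rewrite hx.
have uu : u * u^-1 = 1 by rewrite mulfV // gt_eqF.
set a := expR (e * ln y) in h *.
have a0 : 0 <= a by exact: expR_ge0.
have : a * u^-1 * u <= (y * e + x * (1 - e)) * u by apply: ler_wpM2r => //; exact: ltW.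
have -> : a * u^-1 * u = a by rewrite -mulrA mulVf ?mulr1 // gt_eqF.
move=> h2; apply: (le_trans h2); rewrite le_eqVlt; apply/orP; left; apply/eqP; ring.
Qed.


Lemma kappa_bounds (t : R) : 1 < t <= 2 ->
  0 < kappa t /\ kappa t <= t - 1 /\ kappa t <= 1.
Proof.
move=> /andP[t1 t2].
have s0 := sqrtr_ge0 (3 : R).
have s3 : Num.sqrt (3 : R) ^+ 2 = 3 by rewrite sqr_sqrtr.
set s := Num.sqrt (3 : R) in s0 s3 *.
have s1 : 1 < s by nra.
have s2 : s < 2 by nra.
rewrite /kappa -/s; case: eqVneq => [->|t2'].
  by split; [|split]; lra.
case: ifP => _.
  split; first by apply: divr_gt0; [nra|lra].
  split; nra.
set z := 3 - s.
have z1 : 1 < z by rewrite /z; lra.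
have z0 : 0 < z by lra.
have zs : z - 1 < 1 by rewrite /z; lra.
rewrite powR_pos //.
have lz0 : 0 < ln z by exact: ln_gt0.
have lz1 : ln z <= z - 1 by exact: ln_le_sub1.
have ht := expR_ge1Dx ((1 - t) * ln z).
have hlt : expR ((1 - t) * ln z) < 1.
  have : 0 < (t - 1) * ln z by apply: mulr_gt0 => //; lra.
  rewrite -(expR0 R) ltr_expR => h; lra.
set w := expR ((1 - t) * ln z) in ht hlt *.
have w0 : 0 < w by exact: expR_gt0.
have c0 : 0 < (2 + s) / 16 by apply: divr_gt0; lra.
have c1 : (2 + s) / 16 < 1 by rewrite ltr_pdivrMr; lra.
split; first by apply: mulr_gt0 => //; lra.
set c := (2 + s) / 16 in c0 c1 *.
have h1 : 1 - w <= t - 1.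
  have : (t - 1) * ln z <= (t - 1) * 1 by apply: ler_wpM2l; lra.
  nra.
split.
  have : c * (1 - w) <= c * (t - 1) by apply: ler_wpM2l; lra.
  nra.
have : c * (1 - w) <= c * 1 by apply: ler_wpM2l; lra.
nra.
Qed.


Lemma powR_succ x e : 0 < x -> x `^ (e + 1) = x `^ e * x.
Proof.
move=> x0; rewrite !powR_pos // mulrDl mul1r expRD lnK // posrE //.
Qed.

Lemma le_of_sqr (u v : R) : 0 <= v -> u ^+ 2 <= v ^+ 2 -> u <= v.
Proof. move=> v0 h; case: (lerP u v) => // h'; nra. Qed.

Lemma real_a x y d r p k : 0 <= y -> y <= x -> x < r -> 1 < p <= 2 ->
  k <= p - 1 -> k <= 1 -> 0 <= d -> (x - y) ^+ 2 <= d ^+ 2 -> d ^+ 2 <= (x + y) ^+ 2 ->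
  k * r `^ (p - 2) * d ^+ 2 <=
  x `^ (p - 2) * x ^+ 2 + y `^ (p - 2) * y ^+ 2
    - (x `^ (p - 2) + y `^ (p - 2)) * ((x ^+ 2 + y ^+ 2 - d ^+ 2) / 2).
Proof.
move=> y0 yx xr /andP[p1 p2] k1 k2 d0 hd1 hd2.
have r0 : 0 < r by apply: le_lt_trans xr; exact: le_trans yx.
have rho0 : 0 < r `^ (p - 2) by exact: powR_gt0.
set rho := r `^ (p - 2) in rho0 *.
set al := x `^ (p - 2); set be := y `^ (p - 2).
have [y0'|yp] := eqVneq y 0.
  rewrite y0' in hd1 hd2 *; rewrite subr0 addr0 in hd1 hd2.
  have hd : d ^+ 2 = x ^+ 2 by apply/eqP; rewrite eq_le hd1 hd2.
  rewrite hd.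
  have [x0'|xp] := eqVneq x 0.
    rewrite x0'; have -> : (0:R) ^+ 2 = 0 by rewrite expr2 mulr0.
    lra.
  have xpos : 0 < x by rewrite lt_def xp (le_trans y0 yx).
  have ha : rho <= al by apply: powR_anti => //; [exact: ltW|lra].
  have : k * rho <= al by nra.
  move=> h; have := ler_wpM2r (sqr_ge0 x) h.
  have -> : (0:R) ^+ 2 = 0 by rewrite expr2 mulr0.
  lra.
have ypos : 0 < y by rewrite lt_def yp y0.
have xpos : 0 < x by apply: lt_le_trans yx.
have ha : rho <= al by apply: powR_anti => //; [exact: ltW|lra].
have hb : al <= be by apply: powR_anti => //; lra.
have hbern := @bern x y (p - 1) xpos ypos ltac:(apply/andP; split; lra).
have e1 : p - 1 = (p - 2) + 1 by ring.
rewrite e1 !powR_succ // -e1 -/al -/be in hbern.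
have e2 : p - 1 - 1 = p - 2 by ring.
rewrite e2 -/al in hbern.
have hxy : 0 <= x - y by lra.
have hkey : k * rho * (x - y) <= al * x - be * y.
  have : k * rho <= (p - 1) * al by nra.
  move=> h; have := ler_wpM2r hxy h; nra.
have hdxy : x - y <= d.
  have : (x - y) ^+ 2 <= d ^+ 2 := hd1.
  rewrite -ler_sqrt ?sqr_ge0 // !sqrtr_sqr ger0_norm // ger0_norm //.
set C := (al + be) / 2 - k * rho.
have C0 : 0 <= C by rewrite /C; nra.
have h1 : (be - al) * (x + y) <= 2 * C * (x - y) by rewrite /C; nra.
have h2 : (be - al) * (x + y) * (x - y) <= 2 * C * (x - y) * (x - y) by nra.
have h3 : 2 * C * (x - y) * (x - y) <= 2 * C * d ^+ 2.
  rewrite -mulrA; apply: ler_wpM2l; first lra.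
  by rewrite -expr2.
have -> : k * rho * d ^+ 2 = ((al + be) / 2 - C) * d ^+ 2 by rewrite /C; ring.
nra.
Qed.

Lemma real_b x y d r p c : 0 <= y -> y <= x -> x < r -> 2 <= p ->
  0 <= d -> x - y <= d -> c <= d * y ->
  (x `^ (p - 2)) ^+ 2 * d ^+ 2 + 2 * x `^ (p - 2) * (x `^ (p - 2) - y `^ (p - 2)) * c
   + (x `^ (p - 2) - y `^ (p - 2)) ^+ 2 * y ^+ 2
  <= ((p - 1) * r `^ (p - 2) * d) ^+ 2.
Proof.
move=> y0 yx xr p2 d0 hd hc.
have x0 : 0 <= x by exact: le_trans yx.
have q0 : 0 <= p - 2 by lra.
have hb : y `^ (p - 2) <= x `^ (p - 2) by exact: powR_mono.
have ha : x `^ (p - 2) <= r `^ (p - 2) by apply: powR_mono => //; exact: ltW.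
have hdiff := powR_diff_b _ _ _ y0 yx q0.
set al := x `^ (p - 2) in hb ha hdiff *; set be := y `^ (p - 2) in hb hdiff *.
set rho := r `^ (p - 2) in ha *.
have al0 : 0 <= al by exact: powR_ge0.
have h1 : 2 * al * (al - be) * c <= 2 * al * (al - be) * (d * y).
  by apply: ler_wpM2l => //; apply: mulr_ge0; [apply: mulr_ge0 => //|]; lra.
have h2 : (al - be) * y <= (p - 2) * al * d.
  apply: (le_trans hdiff); rewrite -mulrA -[X in _ <= X]mulrA; apply: ler_wpM2l => //.
  by apply: ler_wpM2l.
have h3 : 0 <= al * d + (al - be) * y by apply: addr_ge0; apply: mulr_ge0 => //; lra.
have h4 : al * d + (al - be) * y <= (p - 1) * rho * d.
  have : (p - 1) * al * d <= (p - 1) * rho * d.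
    by apply: ler_wpM2r => //; apply: ler_wpM2l => //; lra.
  lra.
have h5 : (al * d + (al - be) * y) ^+ 2 <= ((p - 1) * rho * d) ^+ 2.
  by rewrite ler_sqr // nnegrE //; exact: le_trans h4.
apply: le_trans h5; nra.
Qed.

Section Vec.
Variable n : nat.
Implicit Types a b c : 'rV[R]_n.

Lemma dotvC a b : dotv a b = dotv b a.
Proof. by rewrite /dotv; apply: eq_bigr => i _; rewrite mulrC. Qed.

Lemma dotvDl a b c : dotv (a + b) c = dotv a c + dotv b c.
Proof. by rewrite /dotv -big_split; apply: eq_bigr => i _; rewrite !mxE mulrDl. Qed.

Lemma dotvZl k a b : dotv (k *: a) b = k * dotv a b.
Proof. by rewrite /dotv mulr_sumr; apply: eq_bigr => i _; rewrite !mxE mulrA. Qed.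

Lemma dotvNl a b : dotv (- a) b = - dotv a b.
Proof. by rewrite -scaleN1r dotvZl mulN1r. Qed.

Lemma dotvBl a b c : dotv (a - b) c = dotv a c - dotv b c.
Proof. by rewrite dotvDl dotvNl. Qed.

Lemma dotvDr a b c : dotv c (a + b) = dotv c a + dotv c b.
Proof. by rewrite dotvC dotvDl !(dotvC c). Qed.

Lemma dotvBr a b c : dotv c (a - b) = dotv c a - dotv c b.
Proof. by rewrite dotvC dotvBl !(dotvC c). Qed.

Lemma dotvZr k a b : dotv a (k *: b) = k * dotv a b.
Proof. by rewrite dotvC dotvZl dotvC. Qed.

Lemma dotv_ge0 a : 0 <= dotv a a.
Proof. by rewrite /dotv; apply: sumr_ge0 => i _; rewrite -expr2 sqr_ge0. Qed.

Lemma dotv_eq0 a : dotv a a = 0 -> a = 0.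
Proof.
move=> h; apply/rowP => i; rewrite mxE.
have := @psumr_eq0P _ _ xpredT (fun i => a ord0 i * a ord0 i).
move=> /(_ (fun i _ => ltac:(by rewrite -expr2 sqr_ge0))) /(_ h) /(_ i isT) /eqP.
by rewrite mulf_eq0 orbb => /eqP.
Qed.

Lemma normv_ge0 a : 0 <= normv a.
Proof. exact: sqrtr_ge0. Qed.

Lemma normv_sq a : normv a ^+ 2 = dotv a a.
Proof. by rewrite /normv sqr_sqrtr // dotv_ge0. Qed.

Lemma normv_eq0 a : normv a = 0 -> a = 0.
Proof. by move=> h; apply: dotv_eq0; rewrite -normv_sq h expr2 mulr0. Qed.

Lemma normvN a : normv (- a) = normv a.
Proof. by rewrite /normv dotvNl dotvC dotvNl opprK. Qed.

Lemma normv0 : normv (0 : 'rV[R]_n) = 0.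
Proof. by rewrite /normv /dotv big1 ?sqrtr0 // => i _; rewrite mxE mul0r. Qed.

Lemma cauchy_schwarz a b : dotv a b <= normv a * normv b.
Proof.
have [ha|ha] := eqVneq (normv a) 0.
  by rewrite (normv_eq0 _ ha) normv0 mul0r /dotv big1 // => i _; rewrite mxE mul0r.
have [hb|hb] := eqVneq (normv b) 0.
  by rewrite (normv_eq0 _ hb) normv0 mulr0 /dotv big1 // => i _; rewrite mxE mulr0.
have xa : 0 < normv a by rewrite lt_def ha normv_ge0.
have xb : 0 < normv b by rewrite lt_def hb normv_ge0.
have := dotv_ge0 (normv b *: a - normv a *: b).
rewrite !(dotvBl, dotvBr, dotvZl, dotvZr) -!normv_sq (dotvC b a).
set x := normv a; set y := normv b; set d := dotv a b => h.
have : 0 <= 2 * x * y * (x * y - d) by nra.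
rewrite pmulr_rge0; first lra.
by rewrite mulr_gt0 // mulr_gt0.
Qed.

Lemma normvB_sq a b : normv (a - b) ^+ 2 = normv a ^+ 2 - 2 * dotv a b + normv b ^+ 2.
Proof. rewrite !normv_sq !(dotvBl, dotvBr) (dotvC b a); ring. Qed.

Lemma normv_plap p a : normv a `^ (p - 2) *: a = plap p a.
Proof. by []. Qed.

Lemma cs_neg a b : - dotv a b <= normv a * normv b.
Proof. by move: (cauchy_schwarz a (- b)); rewrite normvN (dotvC a) dotvNl dotvC. Qed.

Lemma vec_a r p a b : 0 < r -> 1 < p <= 2 -> normv b <= normv a -> normv a < r ->
  kappa p * r `^ (p - 2) * normv (a - b) ^+ 2 <= dotv (plap p a - plap p b) (a - b).
Proof.
move=> r0 hp hyx hxr.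
have [k0 [k1 k2]] := kappa_bounds _ hp.
have hab := normvB_sq a b.
have cs1 := cauchy_schwarz a b.
have cs2 := cs_neg a b.
have y0 := normv_ge0 b.
have d0 := normv_ge0 (a - b).
rewrite /plap !(dotvBl, dotvBr, dotvZl) (dotvC b a) -!normv_sq.
set x := normv a in hab cs1 cs2 hyx hxr *; set y := normv b in hab cs1 cs2 hyx y0 *.
set d := normv (a - b) in hab d0 *.
have hdab : dotv a b = (x ^+ 2 + y ^+ 2 - d ^+ 2) / 2 by rewrite hab; field.
have hd1 : (x - y) ^+ 2 <= d ^+ 2 by rewrite hab; nra.
have hd2 : d ^+ 2 <= (x + y) ^+ 2 by rewrite hab; nra.
apply: le_trans (real_a _ _ _ _ _ _ y0 hyx hxr hp k1 k2 d0 hd1 hd2) _.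
rewrite hdab le_eqVlt; apply/orP; left; apply/eqP; ring.
Qed.

Lemma dot_comb (al be : R) u b : dotv (al *: u + be *: b) (al *: u + be *: b) =
  al ^+ 2 * normv u ^+ 2 + 2 * al * be * dotv u b + be ^+ 2 * normv b ^+ 2.
Proof.
rewrite !(dotvDl, dotvDr, dotvZl, dotvZr) -!normv_sq (dotvC b u); ring.
Qed.

Lemma plap_sub p a b : plap p a - plap p b =
  normv a `^ (p - 2) *: (a - b) + (normv a `^ (p - 2) - normv b `^ (p - 2)) *: b.
Proof. by rewrite /plap scalerBr scalerBl addrA subrK. Qed.

Lemma vec_b r p a b : 0 < r -> 2 <= p -> normv b <= normv a -> normv a < r ->
  normv (plap p a - plap p b) <= (p - 1) * r `^ (p - 2) * normv (a - b).
Proof.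
move=> r0 hp hyx hxr.
have y0 := normv_ge0 b.
have d0 := normv_ge0 (a - b).
have hc := cauchy_schwarz (a - b) b.
have hab := normvB_sq a b.
have cs1 := cauchy_schwarz a b.
have hdxy : normv a - normv b <= normv (a - b).
  by apply: le_of_sqr => //; rewrite hab; nra.
have hr := real_b _ _ _ _ _ _ y0 hyx hxr hp d0 hdxy hc.
have K0 : 0 <= (p - 1) * r `^ (p - 2) * normv (a - b).
  by apply: mulr_ge0 => //; apply: mulr_ge0; [lra|exact: powR_ge0].
rewrite /normv -[X in _ <= X]ger0_norm // -sqrtr_sqr ler_sqrt ?sqr_ge0 //.
rewrite -/(normv (a - b)) plap_sub.
rewrite dot_comb.
apply: le_trans hr; rewrite le_eqVlt; apply/orP; left; apply/eqP; ring.
Qed.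

End Vec.
End Aux.

Theorem lemma2 (R : realType) (n : nat) :
  (forall (r p : R), 0 < r -> 1 < p <= 2 ->
    forall a b : 'rV[R]_n, normv a < r -> normv b < r ->
      kappa p * r `^ (p - 2) * normv (a - b) ^+ 2
        <= dotv (plap p a - plap p b) (a - b)) /\
  (forall (r p : R), 0 < r -> 2 <= p ->
    forall a b : 'rV[R]_n, normv a < r -> normv b < r ->
      normv (plap p a - plap p b)
        <= 2 * r `^ (p - 2) / kappa (p / (p - 1)) * normv (a - b)).
Proof.
split.
  move=> r p r0 hp a b ha hb.
  case: (lerP (normv b) (normv a)) => hab; first exact: vec_a.
  have := @vec_a R n r p b a r0 hp (ltW hab) hb.
  by rewrite -(opprB a b) normvN -(opprB (plap p a)) dotvNl dotvC dotvNl dotvC opprK.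
move=> r p r0 hp a b ha hb.
have hs : 1 < p / (p - 1) <= 2.
  apply/andP; split.
    by rewrite ltr_pdivlMr; lra.
  by rewrite ler_pdivrMr; lra.
have [k0 [k1 _]] := @kappa_bounds R _ hs.
set k := kappa (p / (p - 1)) in k0 k1 *.
have hk : (p - 1) * k <= 1.
  have : (p - 1) * k <= (p - 1) * (p / (p - 1) - 1) by apply: ler_wpM2l; lra.
  have -> : (p - 1) * (p / (p - 1) - 1) = 1 by field; lra.
  by [].
have hpk : p - 1 <= 2 / k by rewrite ler_pdivlMr //; lra.
have hmain : normv (plap p a - plap p b) <= (p - 1) * r `^ (p - 2) * normv (a - b).
  case: (lerP (normv b) (normv a)) => hab; first exact: vec_b.
  have := @vec_b R n r p b a r0 hp (ltW hab) hb.
  by rewrite -(opprB a b) normvN -(opprB (plap p a)) normvN.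
apply: (le_trans hmain).
have -> : 2 * r `^ (p - 2) / k * normv (a - b) = (2 / k) * (r `^ (p - 2) * normv (a - b)) by ring.
rewrite -mulrA; apply: ler_wpM2r => //.
by apply: mulr_ge0; [exact: powR_ge0|exact: normv_ge0].
Qed.
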